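(* Let $S=\mathbb{Z}^2\setminus 2\mathbb{Z}^2$ (the decorated lattice) with its set $L$ of nearest-neighbour edges (pairs $\{i,j\}\subset S$ with $\|i-j\|_2=1$). Consider the $XY$ model on $S$ with spins $\sigma_i\in\mathbb{S}^1$ (angles $\theta_i$) and formal Hamiltonian $$H(\sigma)=-\sum_{\{i,j\}\in L}J\langle\sigma_i,\sigma_j\rangle-\sum_{i\in S}h_i\langle\sigma_i,e_2\rangle=-\sum_{\{i,j\}\in L}J\cos(\theta_i-\theta_j)-\sum_{i\in S}h_i\sin\theta_i,$$ with $J>0$, where the field is $h_i=\sum_{j\in 2\mathbb{Z}^2,\ \|i-j\|_2=1} s_{j/2}$ and, for $(a,b)\in\mathbb{Z}^2$, $s_{(a,b)}=(-1)^{\lfloor a/2\rfloor+\lfloor b/2\rfloor}$ (so $h_i\in\{2,0,-2\}$: $+2$ between two North-prescribed even sites, $-2$ between two South-prescribed ones, $0$ otherwise). Then this model displays a spin-flop transition at zero temperature in the East–West direction: there exist two distinct ground states $\theta^{ME}$ and $\theta^{MW}$ whose horizontal spin components are opposite and nonzero, $\sigma^{(1)}(\theta^{ME})=-\sigma^{(1)}(\theta^{MW})\neq 0$.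
   Context: $e_1,e_2$ is the canonical basis of $\mathbb{R}^2$; $\sigma^{(1)}=\langle\sigma,e_1\rangle=\cos\theta$ is the horizontal (East–West) component of a spin. The field $h$ comes from freezing the spins at sites $2k$, $k\in\mathbb{Z}^2$, to North ($s_k=+1$) or South ($s_k=-1$) according to the doubly alternating pattern. A ground state is a configuration on $S$ of minimal energy (no finite modification lowers the energy). $\theta^{ME}$ (''mostly East'') is periodic, taking values NE, E, SE; $\theta^{MW}$ (''mostly West'') is its mirror image NW, W, SW under $\theta\mapsto\pi-\theta$. *)

(* Defs.v *)
From Stdlib Require Import Reals ZArith List.
Open Scope R_scope.

Definition site := (Z * Z)%type.

Definition in_even (p : site) : bool := (Z.even (fst p) && Z.even (snd p))%bool.
Definition inSb (p : site) : bool := negb (in_even p).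
Definition inS (p : site) : Prop := inSb p = true.

(* s_(a,b) = (-1)^(floor(a/2) + floor(b/2))  (Z.div floors) *)
Definition s_pat (q : site) : R :=
  if Z.even (Z.div (fst q) 2 + Z.div (snd q) 2) then 1 else -1.

Definition even_contrib (j : site) : R :=
  if in_even j then s_pat (Z.div (fst j) 2, Z.div (snd j) 2) else 0.

Definition hfield (i : site) : R :=
  even_contrib ((fst i + 1)%Z, snd i) + even_contrib ((fst i - 1)%Z, snd i)
  + even_contrib (fst i, (snd i + 1)%Z) + even_contrib (fst i, (snd i - 1)%Z).

Definition zrange (a b : Z) : list Z :=
  map (fun k => (a + Z.of_nat k)%Z) (seq 0 (Z.to_nat (b - a + 1))).

Definition rsum {A : Type} (l : list A) (f : A -> R) : R :=
  fold_right (fun x acc => f x + acc) 0 l.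

(* a configuration is an angle at each site (values on 2Z^2 are irrelevant) *)
Definition config := site -> R.

Definition bond (J : R) (th : config) (i j : site) : R :=
  if (inSb i && inSb j)%bool then - J * cos (th i - th j) else 0.

Definition site_energy (th : config) (i : site) : R :=
  if inSb i then - hfield i * sin (th i) else 0.

Definition in_box (n : nat) (p : site) : Prop :=
  (- Z.of_nat n <= fst p <= Z.of_nat n)%Z /\ (- Z.of_nat n <= snd p <= Z.of_nat n)%Z.

(* Energy of all nearest-neighbour edges of S having at least one endpoint in
   the box [-n,n]^2 (each edge counted once, plus possibly some edges outside
   the box, which do not matter for comparisons between configurations that
   agree outside the box), and of all field terms in the box. *)
Definition H_box (J : R) (n : nat) (th : config) : R :=
  let N := Z.of_nat n in
  rsum (zrange (- N - 1) N) (fun a => rsum (zrange (- N - 1) N) (fun b =>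
     bond J th (a, b) ((a + 1)%Z, b) + bond J th (a, b) (a, (b + 1)%Z)))
  + rsum (zrange (- N) N) (fun a => rsum (zrange (- N) N) (fun b =>
     site_energy th (a, b))).

(* Ground state: no finite modification (on S) lowers the energy. Every finite
   modification is supported in some box [-n,n]^2. *)
Definition ground_state (J : R) (th : config) : Prop :=
  forall (n : nat) (th' : config),
    (forall p, inS p -> ~ in_box n p -> th' p = th p) ->
    H_box J n th <= H_box J n th'.

(* Main.v *)
Require Import Defs.
From Stdlib Require Import Reals ZArith Lra Lia List Bool FunctionalExtensionality.
Import ListNotations.
Open Scope R_scope.

Definition TT : list (list Z) := [[(0)%Z; (1)%Z; (0)%Z; (0)%Z; (0)%Z; (-1)%Z; (0)%Z; (0)%Z]; [(1)%Z; (1)%Z; (1)%Z; (0)%Z; (-1)%Z; (-1)%Z; (-1)%Z; (0)%Z]; [(0)%Z; (1)%Z; (0)%Z; (0)%Z; (0)%Z; (-1)%Z; (0)%Z; (0)%Z]; [(0)%Z; (0)%Z; (0)%Z; (0)%Z; (0)%Z; (0)%Z; (0)%Z; (0)%Z]; [(0)%Z; (-1)%Z; (0)%Z; (0)%Z; (0)%Z; (1)%Z; (0)%Z; (0)%Z]; [(-1)%Z; (-1)%Z; (-1)%Z; (0)%Z; (1)%Z; (1)%Z; (1)%Z; (0)%Z]; [(0)%Z; (-1)%Z; (0)%Z; (0)%Z; (0)%Z; (1)%Z; (0)%Z; (0)%Z]; [(0)%Z; (0)%Z; (0)%Z; (0)%Z; (0)%Z; (0)%Z; (0)%Z; (0)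%Z]].
Definition TGA : list (list Z) := [[(0)%Z; (0)%Z; (0)%Z; (0)%Z; (0)%Z; (0)%Z; (0)%Z; (0)%Z]; [(0)%Z; (0)%Z; (0)%Z; (0)%Z; (0)%Z; (0)%Z; (0)%Z; (0)%Z]; [(0)%Z; (0)%Z; (0)%Z; (0)%Z; (0)%Z; (0)%Z; (0)%Z; (0)%Z]; [(0)%Z; (-1)%Z; (0)%Z; (0)%Z; (0)%Z; (1)%Z; (0)%Z; (0)%Z]; [(0)%Z; (0)%Z; (0)%Z; (0)%Z; (0)%Z; (0)%Z; (0)%Z; (0)%Z]; [(0)%Z; (0)%Z; (0)%Z; (0)%Z; (0)%Z; (0)%Z; (0)%Z; (0)%Z]; [(0)%Z; (0)%Z; (0)%Z; (0)%Z; (0)%Z; (0)%Z; (0)%Z; (0)%Z]; [(0)%Z; (1)%Z; (0)%Z; (0)%Z; (0)%Z; (-1)%Z; (0)%Z; (0)%Z]].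
Definition TGB : list (list Z) := [[(0)%Z; (1)%Z; (0)%Z; (0)%Z; (0)%Z; (-1)%Z; (0)%Z; (0)%Z]; [(0)%Z; (0)%Z; (0)%Z; (0)%Z; (0)%Z; (0)%Z; (0)%Z; (0)%Z]; [(0)%Z; (0)%Z; (0)%Z; (0)%Z; (0)%Z; (0)%Z; (0)%Z; (0)%Z]; [(0)%Z; (0)%Z; (0)%Z; (0)%Z; (0)%Z; (0)%Z; (0)%Z; (0)%Z]; [(0)%Z; (-1)%Z; (0)%Z; (0)%Z; (0)%Z; (1)%Z; (0)%Z; (0)%Z]; [(0)%Z; (0)%Z; (0)%Z; (0)%Z; (0)%Z; (0)%Z; (0)%Z; (0)%Z]; [(0)%Z; (0)%Z; (0)%Z; (0)%Z; (0)%Z; (0)%Z; (0)%Z; (0)%Z]; [(0)%Z; (0)%Z; (0)%Z; (0)%Z; (0)%Z; (0)%Z; (0)%Z; (0)%Z]].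
Definition TGAv : list (list Z) := [[(0)%Z; (0)%Z; (0)%Z; (0)%Z; (0)%Z; (0)%Z; (0)%Z; (0)%Z]; [(0)%Z; (0)%Z; (0)%Z; (-1)%Z; (0)%Z; (0)%Z; (0)%Z; (1)%Z]; [(0)%Z; (0)%Z; (0)%Z; (0)%Z; (0)%Z; (0)%Z; (0)%Z; (0)%Z]; [(0)%Z; (0)%Z; (0)%Z; (0)%Z; (0)%Z; (0)%Z; (0)%Z; (0)%Z]; [(0)%Z; (0)%Z; (0)%Z; (0)%Z; (0)%Z; (0)%Z; (0)%Z; (0)%Z]; [(0)%Z; (0)%Z; (0)%Z; (1)%Z; (0)%Z; (0)%Z; (0)%Z; (-1)%Z]; [(0)%Z; (0)%Z; (0)%Z; (0)%Z; (0)%Z; (0)%Z; (0)%Z; (0)%Z]; [(0)%Z; (0)%Z; (0)%Z; (0)%Z; (0)%Z; (0)%Z; (0)%Z; (0)%Z]].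
Definition TGBv : list (list Z) := [[(0)%Z; (0)%Z; (0)%Z; (0)%Z; (0)%Z; (0)%Z; (0)%Z; (0)%Z]; [(1)%Z; (0)%Z; (0)%Z; (0)%Z; (-1)%Z; (0)%Z; (0)%Z; (0)%Z]; [(0)%Z; (0)%Z; (0)%Z; (0)%Z; (0)%Z; (0)%Z; (0)%Z; (0)%Z]; [(0)%Z; (0)%Z; (0)%Z; (0)%Z; (0)%Z; (0)%Z; (0)%Z; (0)%Z]; [(0)%Z; (0)%Z; (0)%Z; (0)%Z; (0)%Z; (0)%Z; (0)%Z; (0)%Z]; [(-1)%Z; (0)%Z; (0)%Z; (0)%Z; (1)%Z; (0)%Z; (0)%Z; (0)%Z]; [(0)%Z; (0)%Z; (0)%Z; (0)%Z; (0)%Z; (0)%Z; (0)%Z; (0)%Z]; [(0)%Z; (0)%Z; (0)%Z; (0)%Z; (0)%Z; (0)%Z; (0)%Z; (0)%Z]].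

Definition tb (L : list (list Z)) (p : site) : Z :=
  nth (Z.to_nat (snd p mod 8)) (nth (Z.to_nat (fst p mod 8)) L nil) 0%Z.

Definition zr (z : Z) : R := match z with Z0 => 0 | Zpos _ => 1 | Zneg _ => -1 end.
Definition sv (d : R) (z : Z) : R := match z with Z0 => 0 | Zpos _ => d | Zneg _ => - d end.

Definition gH (c d : R) (th : config) (p : site) : R :=
  if inSb p then (zr (tb TGA p) * (2 * c) + zr (tb TGB p) * 2) * sin (th p) else 0.
Definition gV (c d : R) (th : config) (p : site) : R :=
  if inSb p then (zr (tb TGAv p) * (2 * c) + zr (tb TGBv p) * 2) * sin (th p) else 0.

Definition thME (d : R) : config := fun p => sv d (tb TT p).

Definition Chat (J c d : R) (th : config) (a b : Z) : R :=
  bond J th (a, b) ((a + 1)%Z, b) + bond J th (a, b) (a, (b + 1)%Z)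
  + site_energy th (a, b)
  + gH c d th (a, b) - gH c d th ((a + 1)%Z, b)
  + gV c d th (a, b) - gV c d th (a, (b + 1)%Z).

Definition periodic {A} (F : site -> A) :=
  forall x y q q', F ((x + q * 8)%Z, (y + q' * 8)%Z) = F (x, y).

Lemma even8 x q : Z.even (x + q * 8) = Z.even x.
Proof.
  replace (x + q * 8)%Z with (x + (4 * q) * 2)%Z by ring.
  rewrite Z.even_add, Z.even_mul. simpl. rewrite orb_true_r. destruct (Z.even x); reflexivity.
Qed.

Lemma inSb_per : periodic inSb.
Proof. intros x y q q'. unfold inSb, in_even. simpl. rewrite !even8. reflexivity. Qed.

Lemma in_even_per : periodic in_even.
Proof. intros x y q q'. unfold in_even. simpl. rewrite !even8. reflexivity. Qed.

Lemma div2_8 x q : ((x + q * 8) / 2 = x / 2 + 4 * q)%Z.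
Proof.
  replace (x + q * 8)%Z with (x + (4 * q) * 2)%Z by ring.
  rewrite Z.div_add by lia. reflexivity.
Qed.

Lemma div2_4 x q : ((x + 4 * q) / 2 = x / 2 + 2 * q)%Z.
Proof.
  replace (x + 4 * q)%Z with (x + (2 * q) * 2)%Z by ring.
  rewrite Z.div_add by lia. reflexivity.
Qed.

Lemma even_contrib_per : periodic even_contrib.
Proof.
  intros x y q q'. unfold even_contrib. rewrite in_even_per.
  destruct (in_even (x, y)); [|reflexivity].
  unfold s_pat. simpl. rewrite !div2_8, !div2_4.
  replace (x / 2 / 2 + 2 * q + (y / 2 / 2 + 2 * q'))%Z
    with (x / 2 / 2 + y / 2 / 2 + (q + q') * 2)%Z by ring.
  rewrite Z.even_add, Z.even_mul. simpl. rewrite orb_true_r.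
  destruct (Z.even (x / 2 / 2 + y / 2 / 2)); reflexivity.
Qed.

Lemma hfield_per : periodic hfield.
Proof.
  intros x y q q'. unfold hfield. simpl.
  replace (x + q * 8 + 1)%Z with ((x + 1) + q * 8)%Z by ring.
  replace (x + q * 8 - 1)%Z with ((x - 1) + q * 8)%Z by ring.
  replace (y + q' * 8 + 1)%Z with ((y + 1) + q' * 8)%Z by ring.
  replace (y + q' * 8 - 1)%Z with ((y - 1) + q' * 8)%Z by ring.
  rewrite !even_contrib_per. reflexivity.
Qed.

Lemma tb_per L : periodic (tb L).
Proof.
  intros x y q q'. unfold tb. simpl. rewrite !Z.mod_add by lia. reflexivity.
Qed.

Lemma red {A} (F : site -> A) (HF : periodic F) a b i j :
  F ((a + i)%Z, (b + j)%Z) = F ((a mod 8 + i)%Z, (b mod 8 + j)%Z).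
Proof.
  rewrite (Z_div_mod_eq_full a 8) at 1. rewrite (Z_div_mod_eq_full b 8) at 1.
  replace (8 * (a / 8) + a mod 8 + i)%Z with ((a mod 8 + i) + (a / 8) * 8)%Z by ring.
  replace (8 * (b / 8) + b mod 8 + j)%Z with ((b mod 8 + j) + (b / 8) * 8)%Z by ring.
  apply HF.
Qed.

Lemma red00 {A} (F : site -> A) (HF : periodic F) a b :
  F (a, b) = F ((a mod 8)%Z, (b mod 8)%Z).
Proof. pose proof (red F HF a b 0%Z 0%Z). rewrite !Z.add_0_r in H. exact H. Qed.
Lemma red10 {A} (F : site -> A) (HF : periodic F) a b :
  F ((a + 1)%Z, b) = F ((a mod 8 + 1)%Z, (b mod 8)%Z).
Proof. pose proof (red F HF a b 1%Z 0%Z). rewrite !Z.add_0_r in H. exact H. Qed.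
Lemma red01 {A} (F : site -> A) (HF : periodic F) a b :
  F (a, (b + 1)%Z) = F ((a mod 8)%Z, (b mod 8 + 1)%Z).
Proof. pose proof (red F HF a b 0%Z 1%Z). rewrite !Z.add_0_r in H. exact H. Qed.

Lemma case8 r : (0 <= r < 8)%Z ->
  r = 0%Z \/ r = 1%Z \/ r = 2%Z \/ r = 3%Z \/ r = 4%Z \/ r = 5%Z \/ r = 6%Z \/ r = 7%Z.
Proof. intros; lia. Qed.

Section Trig.
Variables (J d : R).
Hypothesis HJ : 0 < J.
Hypothesis Hc : 0 < cos d.
Hypothesis Hs : J * sin d = 2 * cos d.

Lemma CS u v (sg : R) : sg * sg = 1 ->
  - J * cos (u - v) - 2 * sg * sin u + 2 * sg * cos d * sin v >= - (J * cos d + 2 * sin d).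
Proof.
  intros Hsg. rewrite cos_minus.
  pose proof (sin2_cos2 u) as Hu. pose proof (sin2_cos2 v) as Hv. pose proof (sin2_cos2 d) as Hd.
  unfold Rsqr in *.
  set (cu := cos u) in *; set (su := sin u) in *; set (cv := cos v) in *; set (sv := sin v) in *;
  set (c := cos d) in *; set (s := sin d) in *.
  assert (E : 2 * c * (- J * (cu * cv + su * sv) - 2 * sg * su + 2 * sg * c * sv + (J * c + 2 * s))
            = J * ((c * cv - cu) * (c * cv - cu) + (c * sv + sg * s - su) * (c * sv + sg * s - su))).
  { assert (2 * c * (J * c + 2 * s) = 2 * J) by nra.
    assert (J * ((c * cv - cu) * (c * cv - cu) + (c * sv + sg * s - su) * (c * sv + sg * s - su))
       = J * (c*c*(sv*sv+cv*cv) + (su*su+cu*cu) + sg*sg*(s*s) - 2*c*(cu*cv+su*sv) + 2*sg*s*(c*sv - su)))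
      by ring.
    rewrite H0, Hu, Hv, Hsg.
    replace (J * (c * c * 1 + 1 + 1 * (s * s) - 2 * c * (cu * cv + su * sv) + 2 * sg * s * (c * sv - su)))
      with (J * (s * s + c * c) + J - 2 * J * c * (cu * cv + su * sv) + 2 * sg * (J * s) * (c * sv - su)) by ring.
    rewrite Hd, Hs.
    replace (2 * c * (- J * (cu * cv + su * sv) - 2 * sg * su + 2 * sg * c * sv + (J * c + 2 * s)))
      with (2 * c * (J * c + 2 * s) - 2 * J * c * (cu * cv + su * sv) - 4 * sg * c * su + 4 * sg * c * c * sv) by ring.
    rewrite H. ring. }
  assert (0 <= J * ((c * cv - cu) * (c * cv - cu) + (c * sv + sg * s - su) * (c * sv + sg * s - su))).
  { apply Rmult_le_pos; [lra|]. apply Rplus_le_le_0_compat; apply Rle_0_sqr. }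
  rewrite <- E in H.
  assert (Hc2 : 0 < 2 * c) by (subst c; lra).
  apply Rle_ge. apply (Rmult_le_reg_l (2 * c) _ _ Hc2). lra.
Qed.

End Trig.

Lemma cos_sym u v : cos (u - v) = cos (v - u).
Proof. replace (u - v) with (- (v - u)) by ring. apply cos_neg. Qed.

Lemma JB J w : 0 < J -> - J * cos w >= - J.
Proof. intros. pose proof (COS_bound w). nra. Qed.

Lemma mm x : x - x = 0. Proof. ring. Qed.

Ltac finish_cell J d x y z :=
  repeat rewrite ?Rminus_0_r, ?Rminus_0_l, ?Ropp_involutive, ?mm, ?cos_0, ?sin_0, ?cos_neg, ?sin_neg;
  pose proof (JB J (x - y) ltac:(assumption)); pose proof (JB J (x - z) ltac:(assumption));
  pose proof (CS J d ltac:(assumption) ltac:(assumption) ltac:(assumption) x y 1 ltac:(ring));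
  pose proof (CS J d ltac:(assumption) ltac:(assumption) ltac:(assumption) x y (-1) ltac:(ring));
  pose proof (CS J d ltac:(assumption) ltac:(assumption) ltac:(assumption) y x 1 ltac:(ring));
  pose proof (CS J d ltac:(assumption) ltac:(assumption) ltac:(assumption) y x (-1) ltac:(ring));
  pose proof (CS J d ltac:(assumption) ltac:(assumption) ltac:(assumption) x z 1 ltac:(ring));
  pose proof (CS J d ltac:(assumption) ltac:(assumption) ltac:(assumption) x z (-1) ltac:(ring));
  pose proof (CS J d ltac:(assumption) ltac:(assumption) ltac:(assumption) z x 1 ltac:(ring));
  pose proof (CS J d ltac:(assumption) ltac:(assumption) ltac:(assumption) z x (-1) ltac:(ring));
  rewrite ?(cos_sym y x), ?(cos_sym z x) in *;
  lra.

Lemma cell (J d : R) (HJ : 0 < J) (Hc : 0 < cos d) (Hs : J * sin d = 2 * cos d)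
  (th : config) (a b : Z) :
  Chat J (cos d) d th a b >= Chat J (cos d) d (thME d) a b.
Proof.
  unfold Chat, bond, site_energy, gH, gV, thME.
  generalize (th (a, b)) (th ((a + 1)%Z, b)) (th (a, (b + 1)%Z)); intros x y z.
  rewrite (red10 inSb inSb_per a b), (red01 inSb inSb_per a b), (red00 inSb inSb_per a b).
  rewrite (red00 hfield hfield_per a b).
  rewrite (red10 (tb TT) (tb_per TT) a b), (red01 (tb TT) (tb_per TT) a b), (red00 (tb TT) (tb_per TT) a b).
  rewrite (red10 (tb TGA) (tb_per TGA) a b), (red00 (tb TGA) (tb_per TGA) a b).
  rewrite (red10 (tb TGB) (tb_per TGB) a b), (red00 (tb TGB) (tb_per TGB) a b).
  rewrite (red01 (tb TGAv) (tb_per TGAv) a b), (red00 (tb TGAv) (tb_per TGAv) a b).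
  rewrite (red01 (tb TGBv) (tb_per TGBv) a b), (red00 (tb TGBv) (tb_per TGBv) a b).
  pose proof (Z.mod_pos_bound a 8 ltac:(lia)) as Ha.
  pose proof (Z.mod_pos_bound b 8 ltac:(lia)) as Hb.
  generalize dependent (a mod 8)%Z; intros r Hr.
  generalize dependent (b mod 8)%Z; intros r' Hr'.
  destruct (case8 r Hr) as [->|[->|[->|[->|[->|[->|[->| ->]]]]]]];
  destruct (case8 r' Hr') as [->|[->|[->|[->|[->|[->|[->| ->]]]]]]];
  unfold hfield, even_contrib, in_even, s_pat; simpl.
  all: finish_cell J d x y z.
Qed.

Lemma rsum_cons {A} (x : A) l f : rsum (x :: l) f = f x + rsum l f.
Proof. reflexivity. Qed.

Lemma rsum_ext {A} (l : list A) f g : (forall x, f x = g x) -> rsum l f = rsum l g.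
Proof. intros H; induction l; simpl; [reflexivity|]. rewrite H, IHl. reflexivity. Qed.

Lemma rsum_plus {A} (l : list A) f g : rsum l (fun x => f x + g x) = rsum l f + rsum l g.
Proof. induction l; simpl; [ring|]. rewrite IHl. ring. Qed.

Lemma rsum_minus {A} (l : list A) f g : rsum l (fun x => f x - g x) = rsum l f - rsum l g.
Proof. induction l; simpl; [ring|]. rewrite IHl. ring. Qed.

Lemma rsum_opp {A} (l : list A) f : rsum l (fun x => - f x) = - rsum l f.
Proof. induction l; simpl; [ring|]. rewrite IHl. ring. Qed.

Lemma rsum_le {A} (l : list A) f g : (forall x, f x <= g x) -> rsum l f <= rsum l g.
Proof. intros H; induction l; simpl; [lra|]. specialize (H a). lra. Qed.

Lemma rsum_zero {A} (l : list A) f : (forall x, f x = 0) -> rsum l f = 0.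
Proof. intros H; induction l; simpl; [reflexivity|]. rewrite H, IHl. ring. Qed.

Lemma zrange_cons a b : (a <= b)%Z -> zrange a b = a :: zrange (a + 1) b.
Proof.
  intros H. unfold zrange.
  replace (Z.to_nat (b - a + 1)) with (S (Z.to_nat (b - (a + 1) + 1))) by lia.
  simpl. rewrite Z.add_0_r. f_equal.
  rewrite <- seq_shift, map_map. apply map_ext. intros k. lia.
Qed.

Lemma telescope_aux (F : Z -> R) n : forall a,
  rsum (map (fun k => (a + Z.of_nat k)%Z) (seq 0 n)) (fun x => F (x + 1)%Z - F x)
  = F (a + Z.of_nat n)%Z - F a.
Proof.
  induction n; intros a.
  - simpl. rewrite Z.add_0_r. ring.
  - simpl. rewrite Z.add_0_r. rewrite <- seq_shift, map_map.
    specialize (IHn (a + 1)%Z).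
    rewrite (map_ext (fun x => (a + Z.of_nat (S x))%Z) (fun k => (a + 1 + Z.of_nat k)%Z))
      by (intros; lia).
    rewrite IHn.
    replace (a + 1 + Z.of_nat n)%Z with (a + Z.pos (Pos.of_succ_nat n))%Z by lia.
    ring.
Qed.

Lemma telescope (F : Z -> R) a b : (a <= b + 1)%Z ->
  rsum (zrange a b) (fun x => F (x + 1)%Z - F x) = F (b + 1)%Z - F a.
Proof.
  intros H. unfold zrange. rewrite telescope_aux. f_equal. f_equal. lia.
Qed.

Lemma gs_ME (J d : R) (HJ : 0 < J) (Hc : 0 < cos d) (Hs : J * sin d = 2 * cos d) :
  ground_state J (thME d).
Proof.
  intros n th' Hagr.
  set (c := cos d).
  set (N := Z.of_nat n).
  set (ME := thME d).
  assert (Hout : forall p, ~ in_box n p ->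
     site_energy th' p = site_energy ME p /\ gH c d th' p = gH c d ME p /\ gV c d th' p = gV c d ME p).
  { intros p Hp. unfold site_energy, gH, gV.
    destruct (inSb p) eqn:E; [|auto].
    rewrite (Hagr p E Hp). auto. }
  set (fB := fun a b => (bond J th' (a, b) ((a + 1)%Z, b) + bond J th' (a, b) (a, (b + 1)%Z))
                      - (bond J ME (a, b) ((a + 1)%Z, b) + bond J ME (a, b) (a, (b + 1)%Z))).
  set (fS := fun a b => site_energy th' (a, b) - site_energy ME (a, b)).
  set (fG := fun a b => gH c d th' (a, b) - gH c d ME (a, b)).
  set (fV := fun a b => gV c d th' (a, b) - gV c d ME (a, b)).
  set (R1 := zrange (- N - 1) N).
  set (R0 := zrange (- N) N).
  assert (HR1 : R1 = (- N - 1)%Z :: R0).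
  { unfold R1, R0. rewrite zrange_cons by lia. f_equal. f_equal. lia. }
  assert (Hnb : forall a b, ((a = - N - 1) \/ (a = N + 1) \/ (b = - N - 1) \/ (b = N + 1))%Z ->
            ~ in_box n (a, b)).
  { intros a b H [H1 H2]. simpl in *. unfold N in H. lia. }
  assert (Hdec : forall a b, Chat J c d th' a b - Chat J c d ME a b
     = fB a b + fS a b + (fG a b - fG (a + 1)%Z b) + (fV a b - fV a (b + 1)%Z)).
  { intros a b. unfold Chat, fB, fS, fG, fV. ring. }
  assert (Hpos : 0 <= rsum R1 (fun a => rsum R1 (fun b => Chat J c d th' a b - Chat J c d ME a b))).
  { replace 0 with (rsum R1 (fun a : Z => rsum R1 (fun b : Z => 0))).
    2: { apply rsum_zero. intros; apply rsum_zero; auto. }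
    apply rsum_le. intros a. apply rsum_le. intros b.
    pose proof (cell J d HJ Hc Hs th' a b). unfold c, ME. lra. }
  assert (Hinner : forall a, rsum R1 (fun b => Chat J c d th' a b - Chat J c d ME a b)
     = rsum R1 (fun b => fB a b) + rsum R1 (fun b => fS a b)
       + (rsum R1 (fun b => fG a b) - rsum R1 (fun b => fG (a + 1)%Z b))).
  { intros a. rewrite (rsum_ext _ _ _ (Hdec a)).
    rewrite !rsum_plus, rsum_minus.
    assert (rsum R1 (fun b => fV a b - fV a (b + 1)%Z) = 0).
    { replace (fun b => fV a b - fV a (b + 1)%Z) with (fun b => - (fV a (b + 1)%Z - fV a b))
        by (apply functional_extensionality; intros; ring).
      replace (rsum R1 (fun b => - (fV a (b + 1)%Z - fV a b)))
        with (- rsum R1 (fun b => (fV a (b + 1)%Z - fV a b))).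
      2: { symmetry. apply rsum_opp. }
      unfold R1. rewrite telescope by lia.
      unfold fV.
      destruct (Hout (a, (N + 1)%Z)) as (_ & _ & ->); [apply Hnb; lia|].
      destruct (Hout (a, (- N - 1)%Z)) as (_ & _ & ->); [apply Hnb; lia|].
      ring. }
    rewrite H, Rplus_0_r. reflexivity. }
  assert (Hsum : rsum R1 (fun a => rsum R1 (fun b => Chat J c d th' a b - Chat J c d ME a b))
     = rsum R1 (fun a => rsum R1 (fun b => fB a b)) + rsum R1 (fun a => rsum R1 (fun b => fS a b))).
  { rewrite (rsum_ext _ _ _ Hinner). rewrite !rsum_plus.
    assert (rsum R1 (fun a => rsum R1 (fun b => fG a b) - rsum R1 (fun b => fG (a + 1)%Z b)) = 0).
    { set (FG := fun a => rsum R1 (fun b => fG a b)).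
      replace (fun a => rsum R1 (fun b => fG a b) - rsum R1 (fun b => fG (a + 1)%Z b))
        with (fun a => - (FG (a + 1)%Z - FG a))
        by (apply functional_extensionality; intros; unfold FG; ring).
      replace (rsum R1 (fun a => - (FG (a + 1)%Z - FG a)))
        with (- rsum R1 (fun a => (FG (a + 1)%Z - FG a))).
      2: { symmetry. apply rsum_opp. }
      unfold R1 at 1. rewrite telescope by lia.
      unfold FG. rewrite !rsum_zero; [ring| |].
      - intros b. unfold fG. destruct (Hout ((- N - 1)%Z, b)) as (_ & -> & _); [apply Hnb; lia|]. ring.
      - intros b. unfold fG. destruct (Hout ((N + 1)%Z, b)) as (_ & -> & _); [apply Hnb; lia|]. ring. }
    lra. }
  assert (HS : rsum R1 (fun a => rsum R1 (fun b => fS a b)) = rsum R0 (fun a => rsum R0 (fun b => fS a b))).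
  { assert (Hi : forall a, rsum R1 (fun b => fS a b) = rsum R0 (fun b => fS a b)).
    { intros a. rewrite HR1, rsum_cons.
      unfold fS at 1. destruct (Hout (a, (- N - 1)%Z)) as (-> & _ & _); [apply Hnb; lia|]. ring. }
    rewrite (rsum_ext _ _ _ Hi). rewrite HR1, rsum_cons.
    rewrite (rsum_zero R0 (fun b => fS (- N - 1)%Z b)); [ring|].
    intros b. unfold fS. destruct (Hout ((- N - 1)%Z, b)) as (-> & _ & _); [apply Hnb; lia|]. ring. }
  assert (HH : H_box J n th' - H_box J n ME
     = rsum R1 (fun a => rsum R1 (fun b => fB a b)) + rsum R0 (fun a => rsum R0 (fun b => fS a b))).
  { unfold H_box. fold N. fold R1. fold R0.
    unfold fB, fS.
    rewrite (rsum_ext R1 (fun a => rsum R1 (fun b => _ - _))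
               (fun a => rsum R1 (fun b => bond J th' (a, b) ((a + 1)%Z, b) + bond J th' (a, b) (a, (b + 1)%Z))
                       - rsum R1 (fun b => bond J ME (a, b) ((a + 1)%Z, b) + bond J ME (a, b) (a, (b + 1)%Z))))
      by (intros; apply rsum_minus).
    rewrite (rsum_ext R0 (fun a => rsum R0 (fun b => _ - _))
               (fun a => rsum R0 (fun b => site_energy th' (a, b)) - rsum R0 (fun b => site_energy ME (a, b))))
      by (intros; apply rsum_minus).
    rewrite !rsum_minus. ring. }
  lra.
Qed.

Lemma bond_mirror J th i j : bond J (fun p => PI - th p) i j = bond J th i j.
Proof.
  unfold bond. destruct (inSb i && inSb j)%bool; [|reflexivity].
  replace (PI - th i - (PI - th j)) with (- (th i - th j)) by ring.
  rewrite cos_neg. reflexivity.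
Qed.

Lemma site_mirror th i : site_energy (fun p => PI - th p) i = site_energy th i.
Proof. unfold site_energy. rewrite sin_PI_x. reflexivity. Qed.

Lemma H_box_mirror J n th : H_box J n (fun p => PI - th p) = H_box J n th.
Proof.
  unfold H_box. f_equal.
  - apply rsum_ext; intros a; apply rsum_ext; intros b. rewrite !bond_mirror. reflexivity.
  - apply rsum_ext; intros a; apply rsum_ext; intros b. apply site_mirror.
Qed.

Lemma cos_PI_minus' x : cos (PI - x) = - cos x.
Proof. rewrite cos_minus, cos_PI, sin_PI. ring. Qed.

Theorem lemma1 (J : R) (HJ : 0 < J) :
  exists thME thMW : config,
    ground_state J thME /\ ground_state J thMW /\
    (exists i, inS i /\ (cos (thME i) <> cos (thMW i) \/ sin (thME i) <> sin (thMW i))) /\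
    (forall i, inS i -> cos (thME i) = - cos (thMW i) /\ cos (thME i) <> 0).
Proof.
  set (d := atan (2 / J)).
  assert (Hc : 0 < cos d).
  { unfold d. rewrite cos_atan. apply Rdiv_lt_0_compat; [lra|].
    apply sqrt_lt_R0. pose proof (Rle_0_sqr (2 / J)). lra. }
  assert (Hs : J * sin d = 2 * cos d).
  { pose proof (tan_atan (2 / J)) as Ht. fold d in Ht. unfold tan in Ht.
    assert (sin d = 2 / J * cos d).
    { rewrite <- Ht. field. lra. }
    rewrite H. field. lra. }
  assert (Hpos : forall p, 0 < cos (thME d p)).
  { intros p. unfold thME, sv. destruct (tb TT p).
    - rewrite cos_0. lra.
    - exact Hc.
    - rewrite cos_neg. exact Hc. }
  exists (thME d), (fun p => PI - thME d p).
  split; [apply gs_ME; assumption|].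
  split.
  { intros n th' Hagr.
    rewrite H_box_mirror.
    rewrite <- (H_box_mirror J n th').
    apply gs_ME; try assumption.
    intros p Hp Hb. rewrite (Hagr p Hp Hb). ring. }
  split.
  { exists (1%Z, 0%Z). split; [reflexivity|]. left.
    rewrite cos_PI_minus'. pose proof (Hpos (1%Z, 0%Z)). lra. }
  intros i _. rewrite cos_PI_minus'. pose proof (Hpos i). split; lra.
Qed.
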